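(* Let $1<\gamma\le 15/14$. Let $\mathrm{ALG}$ be a deterministic online list update algorithm with advice such that $\mathrm{ALG}(\sigma)\le\gamma\cdot\mathrm{OPT}(\sigma)$ for every request sequence $\sigma$ (full cost model). Then on inputs of size $n$ (already for a list of two items), $\mathrm{ALG}$ needs to read at least $$\frac{n}{5}\Bigl(1+(7\gamma-7)\log_2(7\gamma-7)+(8-7\gamma)\log_2(8-7\gamma)\Bigr)$$ bits of advice on some input.
   Context: Static list update problem: a list of $l$ distinct items in some initial order; a request sequence $\sigma$ of items is served online in order. Serving a request to the item at position $i$ (from the front) costs $i$ (full cost model). Immediately after an access, the accessed item may be moved closer to the front at no cost (free exchange); at any time two adjacent items may be swapped at cost $1$ (paid exchange). $A(\sigma)$ is the total cost of algorithm $A$ on $\sigma$ and $\mathrm{OPT}(\sigma)$ the minimum cost of any offline algorithm on $\sigma$ from the same initial list. Advice model: before serving, an oracle knowing all of $\sigma$ writes an infinite binary advice tape; the online algorithm may read tape bits at any time, and the number of advice bits read is the length of the shortest prefix of the tape containing all accessed bits. *)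

(* Defs.v *)
From Stdlib Require Import Reals List Arith Lia Classical ClassicalEpsilon Wf_nat.
Import ListNotations.

(* 0-based position of x in the list s; the access cost (full cost model) is
   pos x s + 1. *)
Fixpoint pos (x : bool) (s : list bool) : nat :=
  match s with
  | [] => 0
  | y :: s' => if Bool.eqb x y then 0 else S (pos x s')
  end.

(* paid exchange: swap the adjacent items at 0-based positions i and i+1
   (no effect if out of range) *)
Fixpoint swap_at (i : nat) (s : list bool) : list bool :=
  match i, s with
  | 0, x :: y :: t => y :: x :: t
  | S i', x :: t => x :: swap_at i' t
  | _, _ => s
  end.

Fixpoint rem1 (x : bool) (s : list bool) : list bool :=
  match s with
  | [] => []
  | y :: s' => if Bool.eqb x y then s' else y :: rem1 x s'
  end.

(* free exchange: move the (just accessed) item x forward by d positions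
   (to the front if d exceeds its position) *)
Definition move_fwd (x : bool) (d : nat) (s : list bool) : list bool :=
  let j := pos x s - d in
  firstn j (rem1 x s) ++ x :: skipn j (rem1 x s).

(* What an algorithm does when serving one request: a sequence of paid
   exchanges performed before the access, then the access, then a free
   move of the accessed item towards the front by [free] positions. *)
Record action := mkAction { paid : list nat; free : nat }.

Definition no_action : action := mkAction [] 0.

Definition serve_step (s : list bool) (a : action) (x : bool) : nat * list bool :=
  let s1 := fold_left (fun l i => swap_at i l) (paid a) s in
  (length (paid a) + S (pos x s1), move_fwd x (free a) s1).

Fixpoint cost (s : list bool) (acts : list action) (sigma : list bool) : nat :=
  match sigma with
  | [] => 0
  | x :: sigma' =>
      let a := hd no_action acts in
      let (c, s') := serve_step s a x in
      c + cost s' (tl acts) sigma'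
  end.

Definition init_list : list bool := [false; true].

Definition achievable (s : list bool) (sigma : list bool) (c : nat) : Prop :=
  exists acts, cost s acts sigma = c.

Lemma opt_exists (s sigma : list bool) :
  exists c, achievable s sigma c /\ forall c', achievable s sigma c' -> c <= c'.
Proof.
  destruct (dec_inh_nat_subset_has_unique_least_element (achievable s sigma))
    as [c [[Hc Hmin] _]].
  - intro n; apply classic.
  - exists (cost s [] sigma); exists []; reflexivity.
  - exists c; split; assumption.
Qed.

Definition OPT (s sigma : list bool) : nat :=
  proj1_sig (constructive_indefinite_description _ (opt_exists s sigma)).

(* An online algorithm with
   advice is a function [alg tape prefix] giving the action used to serve the
   last request of [prefix] (the requests revealed so far): the action may
   depend only on the advice tape and the requests seen so far. *)
Definition tape := nat -> bool.
Definition online_alg := tape -> list bool -> action.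

Definition alg_actions (alg : online_alg) (t : tape) (sigma : list bool) : list action :=
  map (fun i => alg t (firstn (S i) sigma)) (seq 0 (length sigma)).

Definition ALG_cost (alg : online_alg) (t : tape) (sigma : list bool) : nat :=
  cost init_list (alg_actions alg t sigma) sigma.

Definition reads_at_most (alg : online_alg) (t : tape) (sigma : list bool) (k : nat) : Prop :=
  forall t' : tape, (forall i, i < k -> t' i = t i) ->
    alg_actions alg t' sigma = alg_actions alg t sigma.

Definition log2 (x : R) : R := (ln x / ln 2)%R.

(* Main.v *)
Require Import Defs.
From Stdlib Require Import Reals List Arith.
From Stdlib Require Import Lia Lra Classical ClassicalEpsilon.
Import ListNotations.

Definition enc (fr : bool) : list bool := [fr; negb fr].
Definition dec (s : list bool) : bool := hd false s.
Definition phi (fr : bool) : nat := if fr then 0 else 1.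
Definition lbc (fr x t : bool) : nat :=
  (if Bool.eqb t fr then 0 else 1) + (if Bool.eqb x t then 1 else 2).
Definition nxt (x t mv : bool) : bool := if mv then x else t.

Lemma fold_swaps : forall l fr, exists t,
  fold_left (fun l i => swap_at i l) l (enc fr) = enc t /\
  (if Bool.eqb t fr then 0 else 1) <= length l.
Proof.
  induction l as [|i l IH]; intros fr.
  - exists fr; simpl; split; [reflexivity|]. destruct fr; simpl; lia.
  - simpl. destruct i as [|i].
    + replace (swap_at 0 (enc fr)) with (enc (negb fr))
        by (destruct fr; reflexivity).
      destruct (IH (negb fr)) as [t [E L]]. exists t. split; [exact E|].
      destruct t, fr; simpl in *; lia.
    + replace (swap_at (S i) (enc fr)) with (enc fr)
        by (destruct fr, i as [|[|[|i]]]; reflexivity).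
      destruct (IH fr) as [t [E L]]. exists t. split; [exact E|].
      destruct t, fr; simpl in *; lia.
Qed.

Lemma step_lem : forall fr a x, exists t mv,
  lbc fr x t <= fst (serve_step (enc fr) a x) /\
  snd (serve_step (enc fr) a x) = enc (nxt x t mv).
Proof.
  intros fr a x. unfold serve_step.
  destruct (fold_swaps (paid a) fr) as [t [E L]]. rewrite E. simpl.
  exists t.
  destruct (free a) as [|d].
  - exists false. split.
    + unfold lbc. destruct x, t, fr; simpl in *; lia.
    + destruct x, t; reflexivity.
  - exists true. split.
    + unfold lbc. destruct x, t, fr; simpl in *; lia.
    + destruct x, t; reflexivity.
Qed.

Fixpoint ocost (f : list bool -> action) (pre s sigma : list bool) : nat :=
  match sigma with
  | [] => 0
  | x :: r => fst (serve_step s (f (pre ++ [x])) x)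
              + ocost f (pre ++ [x]) (snd (serve_step s (f (pre ++ [x])) x)) r
  end.

Fixpoint ostate (f : list bool -> action) (pre s sigma : list bool) : list bool :=
  match sigma with
  | [] => s
  | x :: r => ostate f (pre ++ [x]) (snd (serve_step s (f (pre ++ [x])) x)) r
  end.

Lemma cost_ocost : forall sigma pre s f,
  cost s (map (fun i => f (pre ++ firstn (S i) sigma)) (seq 0 (length sigma))) sigma
  = ocost f pre s sigma.
Proof.
  induction sigma as [|x r IH]; intros pre s f; [reflexivity|].
  simpl length. simpl seq. rewrite <- seq_shift. simpl map.
  rewrite map_map.
  change (firstn 1 (x :: r)) with [x].
  cbn [cost hd tl ocost].
  destruct (serve_step s (f (pre ++ [x])) x) as [c s'] eqn:Es.
  simpl fst; simpl snd.
  replace (map (fun x0 : nat => f (pre ++ x :: firstn (S x0) r)) (seq 0 (length r)))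
    with (map (fun i => f ((pre ++ [x]) ++ firstn (S i) r)) (seq 0 (length r)))
    by (apply map_ext; intros; rewrite <- app_assoc; reflexivity).
  rewrite IH. reflexivity.
Qed.

Lemma ALG_ocost : forall alg t sigma,
  ALG_cost alg t sigma = ocost (alg t) [] init_list sigma.
Proof.
  intros. unfold ALG_cost, alg_actions. exact (cost_ocost sigma [] init_list (alg t)).
Qed.

Definition A f pre s r := ocost f pre s r + phi (dec (ostate f pre s r)).

Lemma A_cons : forall f pre s x r,
  A f pre s (x :: r) = fst (serve_step s (f (pre ++ [x])) x)
     + A f (pre ++ [x]) (snd (serve_step s (f (pre ++ [x])) x)) r.
Proof. intros. unfold A. simpl. lia. Qed.

Lemma A_nil : forall f pre fr, A f pre (enc fr) [] = phi fr.
Proof. intros. unfold A. simpl. reflexivity. Qed.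

Lemma A_step : forall f pre fr x r, exists t mv,
  lbc fr x t + A f (pre ++ [x]) (enc (nxt x t mv)) r <= A f pre (enc fr) (x :: r).
Proof.
  intros. rewrite A_cons.
  destruct (step_lem fr (f (pre ++ [x])) x) as [t [mv [H1 H2]]].
  exists t, mv. rewrite H2. lia.
Qed.

Definition min4 (g : bool -> bool -> nat) :=
  Nat.min (Nat.min (g false false) (g false true)) (Nat.min (g true false) (g true true)).

Fixpoint Mmin (fr : bool) (r : list bool) : nat :=
  match r with
  | [] => phi fr
  | x :: r' => min4 (fun t mv => lbc fr x t + Mmin (nxt x t mv) r')
  end.

Lemma A_ge_Mmin : forall r f pre fr, Mmin fr r <= A f pre (enc fr) r.
Proof.
  induction r as [|x r IH]; intros f pre fr.
  - rewrite A_nil. simpl. lia.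
  - destruct (A_step f pre fr x r) as [t [mv H]].
    specialize (IH f (pre ++ [x]) (nxt x t mv)).
    simpl. unfold min4.
    destruct t, mv; lia.
Qed.

Definition blk (b : bool) : list bool :=
  if b then [true; true; true; false; false] else [true; false; false; true; false].

Lemma MX : forall fr, Mmin fr [false; false; true; false] = if fr then 7 else 6.
Proof. destruct fr; reflexivity. Qed.
Lemma MY : forall fr, Mmin fr [true; true; false; false] = if fr then 6 else 7.
Proof. destruct fr; reflexivity. Qed.

Lemma block_lem : forall f pre fr,
  (forall b, 7 + phi fr <= A f pre (enc fr) (blk b)) /\
  (8 + phi fr <= A f pre (enc fr) (blk false) \/ 8 + phi fr <= A f pre (enc fr) (blk true)).
Proof.
  intros f pre fr.
  pose proof (A_cons f pre (enc fr) true [false;false;true;false]) as EX.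
  pose proof (A_cons f pre (enc fr) true [true;true;false;false]) as EY.
  destruct (step_lem fr (f (pre ++ [true])) true) as [t [mv [Hc Hs]]].
  rewrite Hs in EX, EY.
  pose proof (A_ge_Mmin [false;false;true;false] f (pre ++ [true]) (nxt true t mv)) as HX.
  pose proof (A_ge_Mmin [true;true;false;false] f (pre ++ [true]) (nxt true t mv)) as HY.
  rewrite MX in HX. rewrite MY in HY.
  set (c1 := fst (serve_step (enc fr) (f (pre ++ [true])) true)) in *.
  unfold blk.
  split; [intros []|]; destruct fr, t, mv; cbv [nxt phi lbc Bool.eqb] in *; lia.
Qed.

Lemma ostate_enc : forall r f pre fr,
  ostate f pre (enc fr) r = enc (dec (ostate f pre (enc fr) r)).
Proof.
  induction r as [|x r IH]; intros f pre fr; [reflexivity|].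
  cbn [ostate]. destruct (step_lem fr (f (pre ++ [x])) x) as [t [mv [_ Hs]]].
  rewrite Hs. apply IH.
Qed.

Lemma ocost_app : forall a b f pre s,
  ocost f pre s (a ++ b) = ocost f pre s a + ocost f (pre ++ a) (ostate f pre s a) b.
Proof.
  induction a as [|x a IH]; intros b f pre s.
  - simpl. rewrite app_nil_r. reflexivity.
  - cbn [ocost ostate app]. rewrite IH. rewrite <- app_assoc. simpl app. lia.
Qed.

Lemma ostate_app : forall a b f pre s,
  ostate f pre s (a ++ b) = ostate f (pre ++ a) (ostate f pre s a) b.
Proof.
  induction a as [|x a IH]; intros b f pre s.
  - simpl. rewrite app_nil_r. reflexivity.
  - cbn [ostate app]. rewrite IH. rewrite <- app_assoc. reflexivity.
Qed.

Lemma A_app : forall a b f pre s,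
  A f pre s (a ++ b) = ocost f pre s a + A f (pre ++ a) (ostate f pre s a) b.
Proof.
  intros. unfold A. rewrite ocost_app, ostate_app. lia.
Qed.

Definition nextfr f pre fr b := dec (ostate f pre (enc fr) (blk b)).
Definition errb f pre fr b := Nat.leb (8 + phi fr) (A f pre (enc fr) (blk b)).

Fixpoint Err f pre fr (w : list bool) : nat :=
  match w with
  | [] => 0
  | b :: w' => (if errb f pre fr b then 1 else 0) + Err f (pre ++ blk b) (nextfr f pre fr b) w'
  end.

Definition sig_of (w : list bool) : list bool := concat (map blk w).

Lemma seq_lb : forall w f pre fr,
  7 * length w + Err f pre fr w + phi fr <= A f pre (enc fr) (sig_of w).
Proof.
  unfold sig_of.
  induction w as [|b w IH]; intros f pre fr.
  - simpl. rewrite A_nil. lia.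
  - simpl concat. simpl map. simpl concat. rewrite A_app.
    rewrite (ostate_enc (blk b) f pre fr).
    specialize (IH f (pre ++ blk b) (dec (ostate f pre (enc fr) (blk b)))).
    destruct (block_lem f pre fr) as [H7 _]. specialize (H7 b).
    simpl length. simpl Err. unfold nextfr, errb.
    unfold A at 1 in H7.
    destruct (Nat.leb_spec (8 + phi fr) (A f pre (enc fr) (blk b))) as [Hl|Hl];
      unfold A at 1 in Hl; lia.
Qed.

Lemma Err_le : forall w f pre fr, Err f pre fr w <= length w.
Proof.
  induction w as [|b w IH]; intros; simpl; [lia|].
  specialize (IH f (pre ++ blk b) (nextfr f pre fr b)). destruct errb; lia.
Qed.

Lemma length_sig : forall w, length (sig_of w) = 5 * length w.
Proof.
  unfold sig_of. induction w as [|b w IH]; [reflexivity|].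
  simpl. rewrite length_app, IH. destruct b; simpl; lia.
Qed.

Definition blkacts (b : bool) : list action :=
  if b then [mkAction [] 1; no_action; no_action; mkAction [] 1; no_action]
  else [no_action; no_action; no_action; no_action; no_action].

Lemma cost_blk : forall b A S,
  cost init_list (blkacts b ++ A) (blk b ++ S) = 7 + cost init_list A S.
Proof. destruct b; reflexivity. Qed.

Lemma OPT_le : forall w, OPT init_list (sig_of w) <= 7 * length w.
Proof.
  intros w. unfold OPT.
  pose proof (proj2_sig (constructive_indefinite_description _ (opt_exists init_list (sig_of w)))) as [_ Hmin].
  apply Hmin. exists (concat (map blkacts w)). clear Hmin.
  unfold sig_of. induction w as [|b w IH]; [reflexivity|].
  simpl. rewrite cost_blk, IH. lia.
Qed.

Open Scope R_scope.

Fixpoint Wt (p : R) f pre fr (w : list bool) : R :=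
  match w with
  | [] => 1
  | b :: w' => (if errb f pre fr b then p else 1 - p) * Wt p f (pre ++ blk b) (nextfr f pre fr b) w'
  end.

Lemma Wt_form : forall p w f pre fr,
  Wt p f pre fr w = p ^ (Err f pre fr w) * (1 - p) ^ (length w - Err f pre fr w).
Proof.
  intros p. induction w as [|b w IH]; intros f pre fr; [simpl; ring|].
  cbn [Wt Err length].
  rewrite IH. pose proof (Err_le w f (pre ++ blk b) (nextfr f pre fr b)).
  destruct errb.
  - simpl. ring.
  - rewrite Nat.add_0_l. replace (S (length w) - Err f (pre ++ blk b) (nextfr f pre fr b) w)%nat
      with (S (length w - Err f (pre ++ blk b) (nextfr f pre fr b) w))%nat by lia.
    cbn [pow]. ring.
Qed.

Lemma Wt_nonneg : forall p w f pre fr, 0 <= p <= 1 -> 0 <= Wt p f pre fr w.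
Proof.
  intros p. induction w as [|b w IH]; intros f pre fr Hp; simpl; [lra|].
  apply Rmult_le_pos; [destruct errb; lra | apply IH; exact Hp].
Qed.

Definition sumR (l : list R) : R := fold_right Rplus 0 l.

Lemma sumR_app : forall l1 l2, sumR (l1 ++ l2) = sumR l1 + sumR l2.
Proof. induction l1; intros; simpl; [ring|]. unfold sumR in *. simpl. rewrite IHl1. ring. Qed.

Lemma sumR_nonneg : forall {T} (g : T -> R) l, (forall x, 0 <= g x) -> 0 <= sumR (map g l).
Proof. intros T g l H. induction l; simpl; [lra|]. specialize (H a). unfold sumR in *. lra. Qed.

Lemma sumR_le : forall {T} (g h : T -> R) l, (forall x, In x l -> g x <= h x) ->
  sumR (map g l) <= sumR (map h l).
Proof.
  intros T g h l H. induction l; simpl; [lra|].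
  unfold sumR in *. simpl. apply Rplus_le_compat.
  - apply H; left; reflexivity.
  - apply IHl. intros; apply H; right; assumption.
Qed.

Lemma sumR_in : forall {T} (g : T -> R) l x, In x l -> (forall y, 0 <= g y) ->
  g x <= sumR (map g l).
Proof.
  intros T g l x Hin Hg. induction l; [destruct Hin|].
  destruct Hin as [<-|Hin]; unfold sumR in *; simpl.
  - pose proof (sumR_nonneg g l Hg). unfold sumR in *. lra.
  - specialize (IHl Hin). specialize (Hg a). lra.
Qed.

Lemma sumR_const : forall {T} (c : R) (l : list T), sumR (map (fun _ => c) l) = INR (length l) * c.
Proof.
  intros T c l. induction l; [simpl; unfold sumR; simpl; ring|]. unfold sumR in *.
  cbn [map fold_right length]. rewrite IHl, S_INR. ring.
Qed.

Lemma sumR_swap : forall {T U} (g : T -> U -> R) (l1 : list T) (l2 : list U),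
  sumR (map (fun x => sumR (map (fun y => g x y) l2)) l1)
  = sumR (map (fun y => sumR (map (fun x => g x y) l1)) l2).
Proof.
  intros T U g l1 l2. induction l1 as [|a l1 IH]; simpl.
  - induction l2; simpl; [reflexivity|]. unfold sumR in *; simpl. rewrite <- IHl2. ring.
  - unfold sumR at 1. simpl. fold (sumR (map (fun x => sumR (map (fun y => g x y) l2)) l1)).
    rewrite IH. clear IH. induction l2; simpl; [unfold sumR; simpl; ring|].
    unfold sumR in *; simpl. rewrite <- IHl2. ring.
Qed.

Fixpoint allw (m : nat) : list (list bool) :=
  match m with
  | O => [[]]
  | S m => map (cons false) (allw m) ++ map (cons true) (allw m)
  end.

Lemma allw_len : forall m w, In w (allw m) -> length w = m.
Proof.
  induction m; intros w H; simpl in H.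
  - destruct H as [<-|[]]; reflexivity.
  - apply in_app_or in H. destruct H as [H|H]; apply in_map_iff in H;
      destruct H as [w' [<- H]]; simpl; f_equal; apply IHm; exact H.
Qed.

Lemma allw_in : forall w, In w (allw (length w)).
Proof.
  induction w as [|b w IH]; simpl; [left; reflexivity|].
  apply in_or_app. destruct b; [right|left]; apply in_map; exact IH.
Qed.

Lemma allw_length : forall m, length (allw m) = (2 ^ m)%nat.
Proof.
  induction m; simpl; [reflexivity|]. rewrite length_app, !length_map, IHm. lia.
Qed.

Lemma sum_Wt_cons : forall p f pre fr b L,
  sumR (map (fun w => Wt p f pre fr (b :: w)) L)
  = (if errb f pre fr b then p else 1 - p) * sumR (map (Wt p f (pre ++ blk b) (nextfr f pre fr b)) L).
Proof.
  intros. induction L; unfold sumR in *; cbn [map fold_right]; [ring|]. rewrite IHL.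
  cbn [Wt]. ring.
Qed.

Lemma sum_Wt_le1 : forall p m f pre fr, 0 <= p <= 1/2 ->
  sumR (map (Wt p f pre fr) (allw m)) <= 1.
Proof.
  intros p m. induction m; intros f pre fr Hp.
  - simpl. unfold sumR. simpl. lra.
  - simpl allw. rewrite map_app, sumR_app, !map_map.
    rewrite !sum_Wt_cons.
    pose proof (IHm f (pre ++ blk false) (nextfr f pre fr false) Hp) as H1.
    pose proof (IHm f (pre ++ blk true) (nextfr f pre fr true) Hp) as H2.
    pose proof (sumR_nonneg (Wt p f (pre ++ blk false) (nextfr f pre fr false)) (allw m)
       (fun w => Wt_nonneg p w _ _ _ ltac:(lra))) as N1.
    pose proof (sumR_nonneg (Wt p f (pre ++ blk true) (nextfr f pre fr true)) (allw m)
       (fun w => Wt_nonneg p w _ _ _ ltac:(lra))) as N2.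
    destruct (block_lem f pre fr) as [_ Hor].
    unfold errb.
    destruct (Nat.leb_spec (8 + phi fr) (A f pre (enc fr) (blk false)));
    destruct (Nat.leb_spec (8 + phi fr) (A f pre (enc fr) (blk true))); try lia; nra.
Qed.

Lemma ln_le' : forall x y, 0 < x -> x <= y -> ln x <= ln y.
Proof.
  intros x y Hx [H|H]; [left; apply ln_increasing; auto | right; subst; reflexivity].
Qed.

Lemma exp_le' : forall x y, x <= y -> exp x <= exp y.
Proof. intros x y [H|H]; [left; apply exp_increasing; auto | right; subst; reflexivity]. Qed.

Lemma collectK : forall (P : list bool -> nat -> Prop) (B : R) l,
  (forall w k k', (k <= k')%nat -> P w k -> P w k') ->
  (forall w, In w l -> exists k, P w k /\ INR k < B) ->
  exists K, (forall w, In w l -> P w K) /\ (l = [] \/ INR K < B).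
Proof.
  intros P B l Hmono. induction l as [|w l IH]; intros Hl.
  - exists 0%nat. split; [intros w []|left; reflexivity].
  - destruct (Hl w (or_introl eq_refl)) as [k [Hk HkB]].
    destruct IH as [K [HK HKB]]; [intros; apply Hl; right; auto|].
    destruct HKB as [Hnil|HKB].
    + subst l. exists k. split; [intros w' [<-|[]]; exact Hk | right; exact HkB].
    + exists (Nat.max k K). split.
      * intros w' [<-|Hin].
        -- apply Hmono with k; [lia|exact Hk].
        -- apply Hmono with K; [lia|apply HK; exact Hin].
      * right. destruct (Nat.max_spec k K) as [[_ ->]|[_ ->]]; assumption.
Qed.

Definition tp (u : list bool) : tape := fun i => nth i u false.

Close Scope R_scope.

Theorem theorem2 (gamma : R) (Hg1 : (1 < gamma)%R) (Hg2 : (gamma <= 15 / 14)%R)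
  (alg : online_alg) (adv : list bool -> tape)
  (Hcomp : forall sigma : list bool,
      (INR (ALG_cost alg (adv sigma) sigma) <= gamma * INR (OPT init_list sigma))%R)
  (n : nat) (Hn : Nat.modulo n 5 = 0) :
  exists sigma : list bool, length sigma = n /\
    forall k : nat, reads_at_most alg (adv sigma) sigma k ->
      (INR n / 5 * (1 + (7 * gamma - 7) * log2 (7 * gamma - 7)
                      + (8 - 7 * gamma) * log2 (8 - 7 * gamma)) <= INR k)%R.
Proof.
  set (B := (INR n / 5 * (1 + (7 * gamma - 7) * log2 (7 * gamma - 7)
                      + (8 - 7 * gamma) * log2 (8 - 7 * gamma)))%R).
  set (p := (7 * gamma - 7)%R).
  assert (Hp0 : (0 < p)%R) by (unfold p; lra).
  assert (Hp2 : (p <= 1/2)%R) by (unfold p; lra).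
  set (m := (n / 5)%nat).
  assert (Hnm : n = (5 * m)%nat) by (pose proof (Nat.div_mod_eq n 5); unfold m; lia).
  destruct (classic (exists sigma : list bool, length sigma = n /\
    forall k : nat, reads_at_most alg (adv sigma) sigma k -> (B <= INR k)%R)) as [H|H];
    [exact H|exfalso].
  assert (Hw : forall w, In w (allw m) -> exists k,
     reads_at_most alg (adv (sig_of w)) (sig_of w) k /\ (INR k < B)%R).
  { intros w Hin. apply allw_len in Hin.
    pose proof (not_ex_all_not _ _ H (sig_of w)) as H1.
    apply not_and_or in H1. destruct H1 as [H1|H1].
    - exfalso; apply H1; rewrite length_sig; lia.
    - apply not_all_ex_not in H1. destruct H1 as [k Hk]. apply imply_to_and in Hk.
      exists k. destruct Hk as [Hk1 Hk2]. split; [exact Hk1|apply Rnot_le_lt; exact Hk2]. }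
  destruct (collectK (fun w k => reads_at_most alg (adv (sig_of w)) (sig_of w) k) B (allw m))
    as [K [HK HKB]].
  { intros w k k' Hkk' Hr t' Ht'. apply Hr. intros i Hi. apply Ht'. lia. }
  { exact Hw. }
  assert (HKB' : (INR K < B)%R).
  { destruct HKB as [HKB|HKB]; [|exact HKB].
    pose proof (allw_in (repeat false m)) as Hr. rewrite repeat_length, HKB in Hr.
    destruct Hr. }
  clear HKB Hw H.
  set (uw := fun w => map (adv (sig_of w)) (seq 0 K)).
  set (c := exp (INR m * (p * ln p + (1 - p) * ln (1 - p)))).
  assert (Claim1 : forall w, In w (allw m) -> (c <= Wt p (alg (tp (uw w))) [] false w)%R).
  { intros w Hin.
    pose proof (allw_len _ _ Hin) as Hlen.
    assert (Eact : alg_actions alg (tp (uw w)) (sig_of w)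
                   = alg_actions alg (adv (sig_of w)) (sig_of w)).
    { apply (HK w Hin). intros i Hi. unfold tp, uw.
      rewrite (nth_indep _ false (adv (sig_of w) 0%nat)) by (rewrite length_map, length_seq; lia).
      rewrite map_nth, seq_nth by lia. reflexivity. }
    assert (Hc : ALG_cost alg (tp (uw w)) (sig_of w) = ALG_cost alg (adv (sig_of w)) (sig_of w))
      by (unfold ALG_cost; rewrite Eact; reflexivity).
    pose proof (Hcomp (sig_of w)) as Hcw. rewrite <- Hc in Hcw.
    pose proof (OPT_le w) as Hopt. apply le_INR in Hopt.
    pose proof (seq_lb w (alg (tp (uw w))) [] false) as Hlb.
    assert (HA : (A (alg (tp (uw w))) [] (enc false) (sig_of w)
                  <= ALG_cost alg (tp (uw w)) (sig_of w) + 1)%nat).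
    { rewrite ALG_ocost. unfold A. change init_list with (enc false).
      destruct (dec _); simpl; lia. }
    set (E := Err (alg (tp (uw w))) [] false w) in *.
    assert (HE : (7 * m + E <= ALG_cost alg (tp (uw w)) (sig_of w))%nat)
      by (simpl phi in Hlb; lia).
    apply le_INR in HE. rewrite plus_INR, mult_INR in HE.
    rewrite mult_INR, Hlen in Hopt.
    assert (Hgam : (0 <= gamma)%R) by lra.
    assert (HEp : (INR E <= p * INR m)%R).
    { unfold p. simpl (INR 7) in *. nra. }
    rewrite Wt_form. rewrite Hlen. fold E.
    assert (HEm : (E <= m)%nat) by (pose proof (Err_le w (alg (tp (uw w))) [] false); fold E in H; lia).
    assert (Hq : (0 < 1 - p)%R) by lra.
    assert (HW : (0 < p ^ E * (1 - p) ^ (m - E))%R)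
      by (apply Rmult_lt_0_compat; apply pow_lt; assumption).
    rewrite <- (exp_ln _ HW). unfold c. apply exp_le'.
    rewrite ln_mult by (apply pow_lt; assumption).
    rewrite !ln_pow by assumption. rewrite minus_INR by exact HEm.
    assert (Hl : (ln p <= ln (1 - p))%R) by (apply ln_le'; lra).
    assert (Hpos : (0 <= (p * INR m - INR E) * (ln (1 - p) - ln p))%R)
      by (apply Rmult_le_pos; lra).
    nra. }
  assert (Claim2 : (INR (length (allw m)) * c <= INR (length (allw K)) * 1)%R).
  { rewrite <- !sumR_const.
    apply Rle_trans with
      (sumR (map (fun w => sumR (map (fun u => Wt p (alg (tp u)) [] false w) (allw K))) (allw m))).
    - apply sumR_le. intros w Hin.
      apply Rle_trans with (Wt p (alg (tp (uw w))) [] false w); [apply Claim1; exact Hin|].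
      apply (sumR_in (fun u => Wt p (alg (tp u)) [] false w)).
      + pose proof (allw_in (uw w)) as Hu. unfold uw in Hu at 2.
        rewrite length_map, length_seq in Hu. exact Hu.
      + intros u. apply Wt_nonneg. lra.
    - rewrite sumR_swap. apply sumR_le. intros u _.
      apply sum_Wt_le1. lra. }
  rewrite !allw_length, !pow_INR in Claim2.
  replace (INR 2) with 2%R in Claim2 by (simpl; ring).
  assert (Hc0 : (0 < c)%R) by (unfold c; apply exp_pos).
  assert (H2m : (0 < 2 ^ m)%R) by (apply pow_lt; lra).
  apply ln_le' in Claim2; [|apply Rmult_lt_0_compat; assumption].
  rewrite Rmult_1_r in Claim2.
  rewrite ln_mult, !ln_pow in Claim2 by (lra || assumption).
  unfold c in Claim2. rewrite ln_exp in Claim2.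
  assert (Hln2 : (0 < ln 2)%R) by (pose proof ln_lt_2; lra).
  assert (HB : B = ((INR m * ln 2 + INR m * (p * ln p + (1 - p) * ln (1 - p))) / ln 2)%R).
  { unfold B, log2. fold p. replace (8 - 7 * gamma)%R with (1 - p)%R by (unfold p; ring).
    rewrite Hnm, mult_INR. simpl (INR 5). field. lra. }
  assert (HBK : (B <= INR K)%R).
  { rewrite HB. apply (Rmult_le_reg_r (ln 2)); [exact Hln2|].
    unfold Rdiv. rewrite Rmult_assoc, Rinv_l by lra. lra. }
  lra.
Qed.
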